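(* Let $\{a_n\}_{n\ge1}$ be a sequence of positive real numbers. Suppose there are positive real numbers $r_1,r_2$ such that for all sufficiently large $n$ \[ \frac{a_{2n}}{a_n}<\frac{1}{2+r_1}\quad\text{and}\quad\frac{a_{2n+1}}{a_n}<\frac{1}{2+r_2}. \] Then $\sum_{n=1}^\infty a_n$ converges. *)

(* Defs.v *)
From Stdlib Require Import Reals.
From Coquelicot Require Import Coquelicot.

(* Main.v *)
Require Import Defs.
From Stdlib Require Import Reals.
From Coquelicot Require Import Coquelicot.
From Stdlib Require Import Lra Lia.
Open Scope R_scope.

Fixpoint ps (a : nat -> R) (m : nat) : R :=
  match m with O => 0 | S m' => ps a m' + a m' end.

Lemma ps_mono (a : nat -> R) : (forall n, (1 <= n)%nat -> 0 < a n) ->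
  forall i k, (1 <= i)%nat -> ps a i <= ps a (i + k).
Proof.
  intros Ha i k Hi. induction k.
  - rewrite Nat.add_0_r; lra.
  - rewrite Nat.add_succ_r; simpl. pose proof (Ha (i+k)%nat ltac:(lia)). lra.
Qed.

Lemma ps_mono' (a : nat -> R) : (forall n, (1 <= n)%nat -> 0 < a n) ->
  forall i j, (1 <= i)%nat -> (i <= j)%nat -> ps a i <= ps a j.
Proof.
  intros Ha i j Hi Hij. replace j with (i + (j - i))%nat by lia.
  apply ps_mono; auto.
Qed.

Lemma block (a : nat -> R) (c : R) (m0 : nat) :
  (forall n, (m0 <= n)%nat -> a (2*n)%nat + a (2*n+1)%nat <= c * a n) ->
  forall m k, (m0 <= m)%nat ->
  ps a (2*m + 2*k) - ps a (2*m) <= c * (ps a (m + k) - ps a m).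
Proof.
  intros H m k Hm. induction k.
  - replace (2*m+2*0)%nat with (2*m)%nat by lia. rewrite Nat.add_0_r. lra.
  - replace (2*m+2*S k)%nat with (S (S (2*m+2*k))) by lia.
    rewrite Nat.add_succ_r. cbn [ps].
    pose proof (H (m+k)%nat ltac:(lia)) as Hk.
    replace (2*(m+k))%nat with (2*m+2*k)%nat in Hk by lia.
    replace (2*m+2*k+1)%nat with (S (2*m+2*k)) in Hk by lia.
    lra.
Qed.

Theorem corollary2p1p3 (a : nat -> R) (r1 r2 : R) :
  (forall n : nat, (1 <= n)%nat -> 0 < a n) ->
  0 < r1 -> 0 < r2 ->
  (exists N : nat, forall n : nat, (N <= n)%nat -> (1 <= n)%nat ->
      a (2 * n)%nat / a n < 1 / (2 + r1) /\
      a (2 * n + 1)%nat / a n < 1 / (2 + r2)) ->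
  ex_series (fun n : nat => a (S n)).
Proof.
  intros Ha H1 H2 [N HN].
  set (c := 1 / (2 + r1) + 1 / (2 + r2)).
  assert (Hc0 : 0 < c) by (unfold c; apply Rplus_lt_0_compat; apply Rdiv_lt_0_compat; lra).
  assert (Hc1 : c < 1).
  { unfold c. assert (1/(2+r1) < 1/2) by (apply Rmult_lt_compat_l; [lra| apply Rinv_lt_contravar; nra]).
    assert (1/(2+r2) < 1/2) by (apply Rmult_lt_compat_l; [lra| apply Rinv_lt_contravar; nra]). lra. }
  set (m0 := Nat.max N 1).
  assert (Hstep : forall n, (m0 <= n)%nat -> a (2*n)%nat + a (2*n+1)%nat <= c * a n).
  { intros n Hn. destruct (HN n ltac:(lia) ltac:(lia)) as [A B].
    pose proof (Ha n ltac:(lia)) as Hp.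
    apply (Rmult_lt_compat_r (a n)) in A; auto.
    apply (Rmult_lt_compat_r (a n)) in B; auto.
    unfold Rdiv in A, B. rewrite Rmult_assoc, Rinv_l in A, B by lra.
    unfold c. lra. }
  assert (Hblk : forall m, (m0 <= m)%nat ->
     ps a (4*m) - ps a (2*m) <= c * (ps a (2*m) - ps a m)).
  { intros m Hm. pose proof (block a c m0 Hstep m m Hm) as B.
    replace (2*m+2*m)%nat with (4*m)%nat in B by lia.
    replace (m+m)%nat with (2*m)%nat in B by lia. exact B. }
  set (g := fun K => (2 ^ K * m0)%nat).
  assert (Hg : forall K, (m0 <= g K)%nat).
  { intros K. unfold g. pose proof (Nat.pow_nonzero 2 K ltac:(lia)). nia. }
  assert (HgS : forall K, g (S K) = (2 * g K)%nat).
  { intros K. unfold g. simpl. lia. }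
  set (D := fun K => ps a (2 * g K) - ps a (g K)).
  assert (HD0 : forall K, 0 <= D K).
  { intros K. unfold D. pose proof (Hg K).
    pose proof (ps_mono' a Ha (g K) (2 * g K) ltac:(lia) ltac:(lia)). lra. }
  set (U := ps a (2 * m0) + c / (1 - c) * D 0%nat).
  assert (Hinv : forall K, ps a (2 * g K) + c / (1 - c) * D K <= U).
  { induction K.
    - assert (g 0%nat = m0) as E0 by (unfold g; simpl; lia). unfold U. rewrite E0. lra.
    - rewrite HgS. pose proof (Hblk (g K) (Hg K)) as B.
      replace (2 * (2 * g K))%nat with (4 * g K)%nat by lia.
      unfold D in *. rewrite HgS.
      replace (2 * (2 * g K))%nat with (4 * g K)%nat by lia.
      assert (E : c / (1 - c) * (ps a (4 * g K) - ps a (2 * g K))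
         = c * ((ps a (4 * g K) - ps a (2 * g K)) / (1 - c))) by (field; lra).
      assert (E2 : c / (1 - c) * (ps a (2 * g K) - ps a (g K))
         = c * ((ps a (2 * g K) - ps a (g K)) / (1 - c))) by (field; lra).
      set (X := ps a (4 * g K) - ps a (2 * g K)) in *.
      set (Y := ps a (2 * g K) - ps a (g K)) in *.
      assert (X + c * (X / (1 - c)) <= c * (Y / (1 - c))).
      { replace (X + c * (X / (1 - c))) with (X / (1 - c)) by (field; lra).
        apply (Rmult_le_reg_r (1 - c)); [lra|].
        replace (X / (1 - c) * (1 - c)) with X by (field; lra).
        replace (c * (Y / (1 - c)) * (1 - c)) with (c * Y) by (field; lra). lra. }
      replace (ps a (4 * g K)) with (ps a (2 * g K) + X) by (unfold X; ring).
      lra. }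
  assert (Hbound : forall n, ps a (S (S n)) <= U).
  { intros n. pose proof (Hinv (S (S n))) as HI. pose proof (HD0 (S (S n))).
    assert (HK : forall K, (K <= 2 ^ K)%nat).
    { induction K; simpl; [lia|]. pose proof (Nat.pow_nonzero 2 K ltac:(lia)). lia. }
    pose proof (HK (S (S n))). pose proof (Hg (S (S n))).
    assert (m0 >= 1)%nat by lia.
    assert (S (S n) <= 2 * g (S (S n)))%nat by (unfold g in *; nia).
    pose proof (ps_mono' a Ha (S (S n)) (2 * g (S (S n))) ltac:(lia) ltac:(lia)).
    assert (0 <= c / (1 - c)) by (apply Rdiv_le_0_compat; lra).
    assert (0 <= c / (1 - c) * D (S (S n))) by (apply Rmult_le_pos; auto).
    lra. }
  assert (Hsum : forall n, sum_n (fun i => a (S i)) n = ps a (S (S n)) - a 0%nat).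
  { induction n.
    - rewrite sum_O. simpl. lra.
    - rewrite sum_Sn, IHn. simpl. unfold plus; simpl. ring. }
  destruct (ex_finite_lim_seq_incr (sum_n (fun i => a (S i))) (U - a 0%nat)) as [l Hl].
  - intros n. rewrite !Hsum. simpl. pose proof (Ha (S (S n)) ltac:(lia)). lra.
  - intros n. rewrite Hsum. pose proof (Hbound n). lra.
  - exists l. exact Hl.
Qed.
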